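(* Let $S,T\subseteq\mathrm{Var}$ be disjoint finite sets, $\mu_1\in\mathcal{D}(\mathrm{Mem}[S])$ and $\mu_2\in\mathcal{D}(\mathrm{Mem}[T])$. Let $\mathcal{S}$ be a partition of a subset of $S$ and $\mathcal{T}$ a partition of a subset of $T$. If $\mu_1$ is $\mathcal{S}$-PNA and $\mu_2$ is $\mathcal{T}$-PNA, then every $\mu\in\mu_1\otimes\mu_2$ is $(\mathcal{S}\cup\mathcal{T})$-PNA. Consequently $\mu_1\otimes\mu_2\subseteq\mu_1\oplus\mu_2$ for all $\mu_1,\mu_2\in X$.
   Context: Fix a set $\mathrm{Var}$ of variables; values are real numbers. For finite $S\subseteq\mathrm{Var}$, $\mathrm{Mem}[S]$ is the set of maps $S\to\mathbb{R}$, ordered pointwise; $p_A(m)$ is restriction. $\mathcal{D}(Y)$ denotes countably supported probability distributions on $Y$; for $\mu\in\mathcal{D}(\mathrm{Mem}[S])$, $\mathrm{dom}(\mu)=S$ and $\pi_A\mu$ is the marginal on $A$. $X=\bigcup_{S\text{ finite}}\mathcal{D}(\mathrm{Mem}[S])$. For $\mu_1\in\mathcal{D}(\mathrm{Mem}[S])$, $\mu_2\in\mathcal{D}(\mathrm{Mem}[T])$, the independent product $\mu_1\otimes\mu_2$ is $\emptyset$ if $S\cap T\ne\emptyset$, and otherwise the singleton set of the $\mu\in\mathcal{D}(\mathrm{Mem}[S\cup T])$ with $\mu(x)=\mu_1(p_Sx)\mu_2(p_Tx)$. A partition is a set of pairwise disjoint nonempty sets; $\mathcal{T}$ coarsens $\mathcal{S}$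 if $\bigcup\mathcal{T}=\bigcup\mathcal{S}$ and each element of $\mathcal{T}$ is a union of a subfamily of $\mathcal{S}$. For a partition $\mathcal{S}$ with $\bigcup\mathcal{S}\subseteq\mathrm{dom}(\mu)$, $\mu$ is $\mathcal{S}$-PNA if for every $\mathcal{T}$ coarsening $\mathcal{S}$ and every family $(f_A:\mathrm{Mem}[A]\to[0,\infty))_{A\in\mathcal{T}}$ all non-decreasing or all non-increasing, $\mathbb{E}_{m\sim\mu}[\prod_Af_A(p_Am)]\le\prod_A\mathbb{E}_{m\sim\mu}[f_A(p_Am)]$. $\mu_1\oplus\mu_2$ is empty if $S\cap T\neq\emptyset$ and otherwise is the set of $\mu\in\mathcal{D}(\mathrm{Mem}[S\cup T])$ with $\pi_S\mu=\mu_1$, $\pi_T\mu=\mu_2$ such that $\mu$ is $(\mathcal{S}\cup\mathcal{T})$-PNA for all partitions $\mathcal{S}$ of a subset of $S$ and $\mathcal{T}$ of a subset of $T$ with $\mu_1$ $\mathcal{S}$-PNA and $\mu_2$ $\mathcal{T}$-PNA. *)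

(* Defs.v *)
From HB Require Import structures.
From mathcomp Require Import all_boot all_order all_algebra finmap.
From mathcomp Require Import classical_sets boolp cardinality reals constructive_ereal ereal esum.

Set Implicit Arguments.
Unset Strict Implicit.
Unset Printing Implicit Defensive.

Import Order.TTheory GRing.Theory Num.Theory.
Local Open Scope ring_scope.

Section PNA.
Variables (Var : choiceType) (R : realType).

Definition Mem (S : {fset Var}) := {ffun S -> R}.

Definition mem_le (S : {fset Var}) (m m' : Mem S) : Prop := forall x : S, m x <= m' x.

(* Restriction p_A : Mem[S] -> Mem[A]; only used when A is a subset of S
   (the default value 0 for variables outside S is never relevant). *)
Definition restr (A S : {fset Var}) (m : Mem S) : Mem A :=
  [ffun a : A => (match (insub (fsval a) : option S) with
                 | Some s => m s | None => 0 end : R)].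

Record distr (S : {fset Var}) := Distr {
  dmass :> Mem S -> R;
  dmass_ge0 : forall m, 0 <= dmass m;
  dmass_countable : countable [set m | dmass m != 0];
  dmass_sum1 : (\esum_(m in [set: Mem S]) (dmass m)%:E = 1)%E }.

Definition dom (S : {fset Var}) (mu : distr S) : {fset Var} := S.

Definition expect (S : {fset Var}) (mu : distr S) (g : Mem S -> R) : \bar R :=
  \esum_(m in [set: Mem S]) ((mu m)%:E * (g m)%:E)%E.

Definition marginal (A S : {fset Var}) (mu : distr S) (y : Mem A) : \bar R :=
  \esum_(m in [set m : Mem S | @restr A S m = y]) (mu m)%:E.

Definition bigU (P : {fset {fset Var}}) : {fset Var} := \big[fsetU/fset0]_(A <- P) A.

Definition is_partition (P : {fset {fset Var}}) : Prop :=
  (forall A, A \in P -> A != fset0) /\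
  (forall A B, A \in P -> B \in P -> A != B -> fsetI A B = fset0).

Definition partition_of_subset (P : {fset {fset Var}}) (S : {fset Var}) : Prop :=
  is_partition P /\ fsubset (bigU P) S.

Definition coarsens (Q P : {fset {fset Var}}) : Prop :=
  bigU Q = bigU P /\
  (forall B, B \in Q -> exists F : {fset {fset Var}}, fsubset F P /\ B = bigU F).

Definition nondecr (A : {fset Var}) (f : Mem A -> R) : Prop :=
  forall m m', mem_le m m' -> f m <= f m'.
Definition nonincr (A : {fset Var}) (f : Mem A -> R) : Prop :=
  forall m m', mem_le m m' -> f m' <= f m.

Definition PNA (S : {fset Var}) (mu : distr S) (P : {fset {fset Var}}) : Prop :=
  is_partition P /\ fsubset (bigU P) (dom mu) /\
  forall (Q : {fset {fset Var}}) (f : forall A : {fset Var}, Mem A -> R),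
    is_partition Q -> coarsens Q P ->
    (forall A, A \in Q -> forall m, 0 <= f A m) ->
    ((forall A, A \in Q -> nondecr (f A)) \/ (forall A, A \in Q -> nonincr (f A))) ->
    (expect mu (fun m => (\prod_(A <- Q) f A (@restr A S m))%R)
      <= \big[mule/1%E]_(A <- Q) expect mu (fun m => f A (@restr A S m)))%E.

(* Independent product mu1 (x) mu2, a subset of D(Mem[S u T]):
   empty if S and T intersect, otherwise the distributions mu with
   mu(x) = mu1(p_S x) * mu2(p_T x) (i.e. the singleton of that distribution). *)
Definition indep_prod (S T : {fset Var}) (mu1 : distr S) (mu2 : distr T)
  : set (distr (fsetU S T)) :=
  [set mu | fsetI S T = fset0 /\
     forall x : Mem (fsetU S T), mu x = mu1 (@restr S _ x) * mu2 (@restr T _ x)].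

Definition oplus (S T : {fset Var}) (mu1 : distr S) (mu2 : distr T)
  : set (distr (fsetU S T)) :=
  [set mu | fsetI S T = fset0 /\
     (forall y : Mem S, @marginal S _ mu y = (mu1 y)%:E) /\
     (forall y : Mem T, @marginal T _ mu y = (mu2 y)%:E) /\
     forall (PS PT : {fset {fset Var}}),
       partition_of_subset PS S -> partition_of_subset PT T ->
       PNA mu1 PS -> PNA mu2 PT -> PNA mu (fsetU PS PT)].

End PNA.

Arguments restr {Var R} A {S} m.
Arguments marginal {Var R} A {S} mu y.

(* Main.v *)
From HB Require Import structures.
From mathcomp Require Import all_boot all_order all_algebra finmap.
From mathcomp Require Import classical_sets boolp cardinality reals constructive_ereal ereal esum fsbigop functions.
Require Import Defs.

Set Implicit Arguments.
Unset Strict Implicit.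
Unset Printing Implicit Defensive.
Import Order.TTheory GRing.Theory Num.Theory.
Local Open Scope ring_scope.
Local Open Scope fset_scope.

Section Aux.
Variables (Var : choiceType) (R : realType).
Local Notation Mem := (@Mem Var R).

Definition ev (S : {fset Var}) (m : Mem S) (v : Var) : R :=
  match (insub v : option S) with Some s => m s | None => 0 end.

Lemma evE (S : {fset Var}) (m : Mem S) (s : S) : ev m (val s) = m s.
Proof. by rewrite /ev valK. Qed.

Lemma ev_out (S : {fset Var}) (m : Mem S) v : v \notin S -> ev m v = 0.
Proof. by move=> h; rewrite /ev insubN. Qed.

Lemma ev_in (S : {fset Var}) (m : Mem S) v (h : v \in S) : ev m v = m [`h].
Proof. by rewrite /ev insubT. Qed.

Lemma mem_eqP (S : {fset Var}) (m m' : Mem S) :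
  (forall v, v \in S -> ev m v = ev m' v) -> m = m'.
Proof. by move=> h; apply/ffunP => s; rewrite -(evE m) -(evE m') h ?fsvalP. Qed.

Lemma mem_leP (S : {fset Var}) (m m' : Mem S) :
  (forall v, v \in S -> ev m v <= ev m' v) -> mem_le m m'.
Proof. by move=> h s; rewrite -(evE m) -(evE m') h ?fsvalP. Qed.

Lemma mem_le_ev (S : {fset Var}) (m m' : Mem S) :
  mem_le m m' -> forall v, ev m v <= ev m' v.
Proof.
move=> h v; case: (boolP (v \in S)) => vS; last by rewrite !ev_out.
by rewrite !ev_in h.
Qed.

Lemma ev_restr (A S : {fset Var}) (m : Mem S) v :
  ev (restr A m) v = if v \in A then ev m v else 0.
Proof.
case: (boolP (v \in A)) => vA; last by rewrite ev_out.
by rewrite ev_in /restr ffunE /=.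
Qed.

Definition join (S T : {fset Var}) (x : Mem S) (y : Mem T) : Mem (S `|` T) :=
  [ffun v => if val v \in S then ev x (val v) else ev y (val v)].

Lemma ev_join (S T : {fset Var}) (x : Mem S) (y : Mem T) v :
  ev (join x y) v = if v \in S then ev x v else ev y v.
Proof.
case: (boolP (v \in S `|` T)) => vST; first by rewrite ev_in ffunE.
move: vST; rewrite in_fsetU negb_or => /andP[vS vT].
by rewrite ev_out ?in_fsetU ?(negPf vS) ?(negPf vT) // ev_out.
Qed.

Definition upd (A S : {fset Var}) (x' : Mem A) (x0 : Mem S) : Mem S :=
  [ffun s => if val s \in A then ev x' (val s) else x0 s].

Lemma ev_upd (A S : {fset Var}) (x' : Mem A) (x0 : Mem S) v :
  ev (upd x' x0) v = if v \in S then (if v \in A then ev x' v else ev x0 v) else 0.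
Proof.
case: (boolP (v \in S)) => vS; last by rewrite ev_out.
by rewrite (ev_in (upd x' x0) vS) ffunE /= (ev_in x0 vS).
Qed.


Lemma restr_joinl (S T : {fset Var}) (x : Mem S) (y : Mem T) :
  restr S (join x y) = x.
Proof. by apply: mem_eqP => v vS; rewrite ev_restr vS ev_join vS. Qed.

Lemma restr_joinr (S T : {fset Var}) (x : Mem S) (y : Mem T) :
  S `&` T = fset0 -> restr T (join x y) = y.
Proof.
move=> dST; apply: mem_eqP => v vT; rewrite ev_restr vT ev_join.
case: ifP => // vS; have : v \in S `&` T by rewrite in_fsetI vS vT.
by rewrite dST inE.
Qed.

Lemma join_restr (S T : {fset Var}) (m : Mem (S `|` T)) :
  join (restr S m) (restr T m) = m.
Proof.
apply: mem_eqP => v vST; rewrite ev_join !ev_restr.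
case: ifP => vS; first by rewrite vS.
by move: vST; rewrite in_fsetU vS /= => ->.
Qed.

Lemma mem0_eq (m m' : Mem fset0) : m = m'.
Proof. by apply: mem_eqP => v; rewrite inE. Qed.

Lemma restr_le (A S : {fset Var}) (m m' : Mem S) :
  mem_le m m' -> mem_le (restr A m) (restr A m').
Proof.
move=> h; apply: mem_leP => v _; rewrite !ev_restr; case: ifP => // _.
exact: mem_le_ev.
Qed.

Lemma join_le (S T : {fset Var}) (x x' : Mem S) (y y' : Mem T) :
  mem_le x x' -> mem_le y y' -> mem_le (join x y) (join x' y').
Proof.
move=> h1 h2; apply: mem_leP => v _; rewrite !ev_join; case: ifP => _;
exact: mem_le_ev.
Qed.

Lemma upd_le (A S : {fset Var}) (x x' : Mem A) (x0 : Mem S) :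
  mem_le x x' -> mem_le (upd x x0) (upd x' x0).
Proof.
move=> h; apply: mem_leP => v _; rewrite !ev_upd; case: ifP => // _.
case: ifP => // _; exact: mem_le_ev.
Qed.

Lemma restr_join_updl (B S T : {fset Var}) (x : Mem S) (y : Mem T) (x0 : Mem S) :
  restr B (join x y) = restr B (join (upd (restr (B `&` S) x) x0) y).
Proof.
apply: mem_eqP => v vB; rewrite !ev_restr vB !ev_join ev_upd.
by case: ifP => // vS; rewrite ev_restr in_fsetI vB vS.
Qed.

Lemma restr_join_updr (B S T : {fset Var}) (x : Mem S) (y : Mem T) (y0 : Mem T) :
  restr B (join x y) = restr B (join x (upd (restr (B `&` T) y) y0)).
Proof.
apply: mem_eqP => v vB; rewrite !ev_restr vB !ev_join ev_upd.
case: ifP => // vS; case: (boolP (v \in T)) => vT; last by rewrite ev_out.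
by rewrite ev_restr in_fsetI vB vT.
Qed.

Lemma in_bigU_seq (s : seq {fset Var}) v :
  reflect (exists2 A, A \in s & v \in A) (v \in \big[fsetU/fset0]_(A <- s) A).
Proof.
elim: s => [|A s IH].
  by rewrite big_nil inE; constructor => -[].
rewrite big_cons in_fsetU; case: (boolP (v \in A)) => vA /=.
  by constructor; exists A => //; rewrite inE eqxx.
apply: (iffP IH) => -[B Bs vB]; exists B => //.
- by rewrite inE Bs orbT.
- by move: Bs; rewrite inE => /orP[/eqP eBA|//]; move: vA; rewrite -eBA vB.
Qed.

Lemma in_bigU (P : {fset {fset Var}}) v :
  reflect (exists2 A, A \in P & v \in A) (v \in bigU P).
Proof. exact: in_bigU_seq. Qed.

Lemma sub_bigU (P : {fset {fset Var}}) A v : A \in P -> v \in A -> v \in bigU P.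
Proof. by move=> AP vA; apply/in_bigU; exists A. Qed.


Local Open Scope ereal_scope.

Lemma lee_pmul2l' (x y z : \bar R) : 0 <= x -> 0 <= y -> y <= z -> x * y <= x * z.
Proof. by move=> x0 y0 yz; apply: lee_pmul. Qed.

Lemma esumZ (T : choiceType) (I : set T) (a : T -> \bar R) (r : R) :
  (0 <= r)%R -> (forall i, 0 <= a i) ->
  \esum_(i in I) (r%:E * a i) = r%:E * \esum_(i in I) a i.
Proof.
move=> r0 a0; rewrite /esum -ereal_supZl //; last first.
  apply/set0P; exists 0; exists set0; first exact: fsets_set0.
  by rewrite fsbig_set0.
congr ereal_sup; apply/seteqP; split.
  move=> _ /= [X hX <-].
  by exists (\sum_(i \in X) a i); [exists X|rewrite ge0_mule_fsumr].
by move=> _ /= [_ [X hX <-] <-]; exists X => //; rewrite ge0_mule_fsumr.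
Qed.

Lemma expect_ge0 (S : {fset Var}) (mu : distr R S) g :
  (forall m, (0 <= g m)%R) -> 0 <= expect mu g.
Proof.
by move=> g0; apply: esum_ge0 => m _; apply: mule_ge0; rewrite lee_fin ?dmass_ge0.
Qed.

Lemma expect_cst (S : {fset Var}) (mu : distr R S) (k : R) :
  (0 <= k)%R -> expect mu (fun _ => k) = k%:E.
Proof.
move=> k0; rewrite /expect; under eq_esum do rewrite muleC.
by rewrite esumZ // ?dmass_sum1 ?mule1 // => m; rewrite lee_fin dmass_ge0.
Qed.

Lemma expectZ (S : {fset Var}) (mu : distr R S) (k : R) g :
  (0 <= k)%R -> (forall m, (0 <= g m)%R) ->
  expect mu (fun m => k * g m)%R = k%:E * expect mu g.
Proof.
move=> k0 g0; rewrite /expect -esumZ //; last first.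
  by move=> m; apply: mule_ge0; rewrite lee_fin ?dmass_ge0.
apply: eq_esum => m _; rewrite EFinM muleA (muleC _ k%:E) muleA //.
Qed.

Lemma expect_le (S : {fset Var}) (mu : distr R S) g h :
  (forall m, (0 <= g m)%R) -> (forall m, (g m <= h m)%R) ->
  expect mu g <= expect mu h.
Proof.
move=> g0 gh; apply: le_esum => m _; apply: lee_pmul2l';
by rewrite lee_fin ?dmass_ge0.
Qed.

Lemma expect_fubini (S T : {fset Var}) (mu1 : distr R S) (mu2 : distr R T)
  (mu : distr R (S `|` T)) g :
  S `&` T = fset0 ->
  (forall x, mu x = mu1 (restr S x) * mu2 (restr T x))%R ->
  (forall m, (0 <= g m)%R) ->
  expect mu g = \esum_(y in [set: Mem T]) (mu2 y)%:E * expect mu1 (fun x => g (join x y)).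
Proof.
move=> dST muE g0; rewrite /expect.
rewrite (reindex_esum (@setT (prod (Mem T) (Mem S))) [set: Mem (fsetU S T)]%classic
   (fun p => join p.2 p.1)); last first.
  split.
  - by move=> ? _.
  - move=> [y x] [y' x'] _ _ /= e.
    have e1 := congr1 (restr S) e; have e2 := congr1 (restr T) e.
    by move: e1 e2; rewrite !restr_joinl !restr_joinr // => -> ->.
  - move=> m _; exists (restr T m, restr S m) => //=; exact: join_restr.
have -> : (@setT (prod (Mem T) (Mem S))) = (@setT (Mem T) `*`` (fun _ => @setT (Mem S)))%classic.
  by apply/seteqP; split.
rewrite -(@esum_esum _ _ _ (@setT (Mem T)) (fun _ => @setT (Mem S)) (fun y x => (mu (join x y))%:E * (g (join x y))%:E)); last first.
  by move=> y x _ _; apply: mule_ge0; rewrite lee_fin ?dmass_ge0.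
apply: eq_esum => y _; rewrite -esumZ; last 2 first.
- exact: dmass_ge0.
- by move=> x; apply: mule_ge0; rewrite lee_fin ?dmass_ge0.
apply: eq_esum => x _ /=; rewrite muE restr_joinl restr_joinr //.
by rewrite EFinM muleA (muleC (mu2 y)%:E).
Qed.


Local Close Scope ereal_scope.

Definition QU (Q : {fset {fset Var}}) (U : {fset Var}) : {fset {fset Var}} :=
  [fset B `&` U | B in [fset B in Q | B `&` U != fset0]].

Lemma QUP (Q : {fset {fset Var}}) (U A : {fset Var}) :
  reflect (exists2 B, B \in Q & (B `&` U != fset0) /\ A = B `&` U) (A \in QU Q U).
Proof.
rewrite /QU; apply: (iffP idP) => [/imfsetP[B] /= |[B BQ [nB ->]]].
  by rewrite !inE /= => /andP[BQ nB] ->; exists B.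
by apply/imfsetP; exists B => //; rewrite !inE /= BQ nB.
Qed.

Lemma neq0P (A : {fset Var}) : reflect (exists v, v \in A) (A != fset0).
Proof.
apply: (iffP idP) => [|[v vA]].
  by case/fset0Pn => v vA; exists v.
by apply/fset0Pn; exists v.
Qed.

Lemma QU_partition (Q : {fset {fset Var}}) (U : {fset Var}) : is_partition Q -> is_partition (QU Q U).
Proof.
move=> [Qn Qd]; split.
  by move=> A /QUP[B _ [nB ->]].
move=> A A' /QUP[B BQ [_ ->]] /QUP[B' B'Q [_ ->]] nAA'.
have nBB' : B != B' by apply: contraNneq nAA' => ->.
have := Qd _ _ BQ B'Q nBB'; move/fsetP => h.
apply/fsetP => v; rewrite !in_fsetI inE; have := h v.
rewrite in_fsetI inE => e.
by case: (v \in B) (v \in B') e => [] []; rewrite ?andbF.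
Qed.

Lemma QU_uniq (Q : {fset {fset Var}}) (U B C : {fset Var}) : is_partition Q -> B \in Q -> C \in Q ->
  B `&` U != fset0 -> B `&` U = C `&` U -> B = C.
Proof.
move=> [_ Qd] BQ CQ /neq0P[v vBU] e; apply/eqP; apply: contraT => nBC.
have vCU : v \in C `&` U by rewrite -e.
move: vBU vCU; rewrite !in_fsetI => /andP[vB _] /andP[vC _].
have := Qd _ _ BQ CQ nBC; move/fsetP/(_ v).
by rewrite in_fsetI vB vC inE.
Qed.

Lemma in_part_sub (P : {fset {fset Var}}) S C v :
  partition_of_subset P S -> C \in P -> v \in C -> v \in S.
Proof. by move=> [_ /fsubsetP h] CP vC; apply: h; apply: sub_bigU vC. Qed.

Lemma bigUU (P P' : {fset {fset Var}}) v :
  (v \in bigU (P `|` P')) = (v \in bigU P) || (v \in bigU P').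
Proof.
apply/in_bigU/orP => [[A]|[/in_bigU[A AP vA]|/in_bigU[A AP vA]]].
- rewrite in_fsetU => /orP[AP|AP] vA; [left|right]; exact: sub_bigU vA.
- by exists A => //; rewrite in_fsetU AP.
- by exists A => //; rewrite in_fsetU AP orbT.
Qed.

Lemma QU_coarsens (S T : {fset Var}) PS PT Q :
  S `&` T = fset0 -> partition_of_subset PS S -> partition_of_subset PT T ->
  coarsens Q (PS `|` PT) -> coarsens (QU Q S) PS.
Proof.
move=> dST hPS hPT [eQ hQ].
have nST v : v \in S -> v \in T -> False.
  move=> vS vT; have : v \in S `&` T by rewrite in_fsetI vS vT.
  by rewrite dST inE.
split.
  apply/fsetP => v; apply/in_bigU/in_bigU.
    move=> [A /QUP[B BQ [_ ->]]]; rewrite in_fsetI => /andP[vB vS].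
    have : v \in bigU Q by apply: sub_bigU vB.
    rewrite eQ bigUU => /orP[/in_bigU //|/in_bigU[C CT vC]].
    by case: (nST v vS (in_part_sub hPT CT vC)).
  move=> [C CS vC]; have vS := in_part_sub hPS CS vC.
  have : v \in bigU Q by rewrite eQ bigUU (sub_bigU CS vC).
  move=> /in_bigU[B BQ vB]; exists (B `&` S); last by rewrite in_fsetI vB vS.
  by apply/QUP; exists B => //; split => //; apply/neq0P; exists v; rewrite in_fsetI vB vS.
move=> A /QUP[B BQ [_ ->]].
have [F [FP eB]] := hQ B BQ.
exists [fset C in F | C \in PS]; split.
  apply/fsubsetP => C; rewrite !inE /= => /andP[_]; done.
apply/fsetP => v; rewrite in_fsetI; apply/idP/in_bigU.
  move/andP=> [vB vS]; move: vB; rewrite eB => /in_bigU[C CF vC]; exists C => //.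
  rewrite !inE /= CF /=; have := fsubsetP FP C CF; rewrite in_fsetU => /orP[//|CT].
  by case: (nST v vS (in_part_sub hPT CT vC)).
move=> [C]; rewrite !inE /= => /andP[CF CS] vC.
by rewrite (in_part_sub hPS CS vC) andbT eB (sub_bigU CF vC).
Qed.


Lemma big_QU (T' : Type) (idx : T') (op : Monoid.com_law idx)
  (Q : {fset {fset Var}}) (U : {fset Var}) (G : {fset Var} -> T') :
  is_partition Q ->
  \big[op/idx]_(A <- QU Q U) G A = \big[op/idx]_(B <- Q | B `&` U != fset0) G (B `&` U).
Proof.
move=> pQ; rewrite /QU big_imfset /=; last first.
  move=> B C; rewrite !inE /= => /andP[BQ nB] /andP[CQ _] e.
  exact: QU_uniq pQ BQ CQ nB e.
rewrite [RHS]big_fset_condE; apply: eq_fbigl => x; rewrite !inE; reflexivity.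
Qed.


Definition mon (b : bool) (A : {fset Var}) (f : Mem A -> R) : Prop :=
  forall m m', mem_le m m' -> if b then f m <= f m' else f m' <= f m.

Lemma memE0 (A : {fset Var}) (m m' : Mem A) : A = fset0 -> m = m'.
Proof.
move=> eA; apply: mem_eqP => v vA; have : v \in (fset0 : {fset Var}) by rewrite -eA.
by rewrite inE.
Qed.

Lemma big_pick_one (Q : {fset {fset Var}}) (U B : {fset Var}) (F : {fset Var} -> R) :
  is_partition Q -> B \in Q -> B `&` U != fset0 ->
  \prod_(C <- Q | C `&` U == B `&` U) F C = F B.
Proof.
move=> pQ BQ nB; rewrite big_mkcond (big_fsetD1 B) //= eqxx big1_fset ?mulr1 //.
move=> C; rewrite !inE => /andP[nCB CQ] _; case: eqP => // e.
have nC : C `&` U != fset0 by rewrite e.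
by move: nCB; rewrite (QU_uniq pQ CQ BQ nC e) eqxx.
Qed.

Lemma GL (U : {fset Var}) (nu : distr R U) (P Q : {fset {fset Var}})
  (g : {fset Var} -> forall A : {fset Var}, Mem A -> R) (b : bool) :
  PNA nu P -> is_partition Q -> coarsens (QU Q U) P ->
  (forall B, B \in Q -> forall z, 0 <= g B (B `&` U) z) ->
  (forall B, B \in Q -> mon b (g B (B `&` U))) ->
  (expect nu (fun u => (\prod_(B <- Q) g B (B `&` U) (restr (B `&` U) u))%R) <=
   \big[mule/1%E]_(B <- Q) expect nu (fun u => g B (B `&` U) (restr (B `&` U) u))%R)%E.
Proof.
move=> [_ [_ hPNA]] pQ cQ g0 gm.
pose u0 : Mem U := [ffun => 0].
pose c := \prod_(B <- Q | B `&` U == fset0) g B (B `&` U) (restr (B `&` U) u0).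
pose g' := fun A (z : Mem A) => \prod_(C <- Q | C `&` U == A) g C A z.
have g'E B : B \in Q -> B `&` U != fset0 -> forall z, g' (B `&` U) z = g B (B `&` U) z.
  by move=> BQ nB z; rewrite /g' (big_pick_one (fun C => g C (B `&` U) z)).
have g'0 A z : 0 <= g' A z.
  rewrite /g' big_seq_cond; apply: prodr_ge0 => C /andP[CQ /eqP eA]; subst A; exact: g0.
have c0 : 0 <= c.
  rewrite /c big_seq_cond; apply: prodr_ge0 => C /andP[CQ _]; exact: g0.
have prodE (u : Mem U) : \prod_(B <- Q) g B (B `&` U) (restr (B `&` U) u) =
    c * \prod_(A <- QU Q U) g' A (restr A u).
  rewrite (bigID (fun B => B `&` U == fset0)) /=; congr (_ * _).
    by rewrite /c; apply: eq_bigr => B /eqP e; congr (g B _ _); exact: memE0.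
  rewrite big_QU // big_seq_cond [RHS]big_seq_cond.
  by apply: eq_bigr => B /andP[BQ nB]; rewrite g'E.
have -> : expect nu (fun u => \prod_(B <- Q) g B (B `&` U) (restr (B `&` U) u)) =
    expect nu (fun u => c * \prod_(A <- QU Q U) g' A (restr A u)).
  by congr expect; apply: funext => u; exact: prodE.
rewrite expectZ //; last by move=> m; apply: prodr_ge0 => A _; exact: g'0.
rewrite (bigID (fun B => B `&` U == fset0)) /=.
have -> : \big[mule/1%E]_(B <- Q | B `&` U == fset0)
    expect nu (fun u => g B (B `&` U) (restr (B `&` U) u)) = c%:E.
  rewrite /c -prodEFin big_seq_cond [in RHS]big_seq_cond.
  apply: eq_bigr => B /andP[BQ /eqP e].
  have -> : (fun u : Mem U => g B (B `&` U) (restr (B `&` U) u)) =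
      (fun _ => g B (B `&` U) (restr (B `&` U) u0)).
    by apply: funext => u; congr (g B _ _); exact: memE0.
  by rewrite expect_cst //; exact: g0.
have -> : \big[mule/1%E]_(B <- Q | B `&` U != fset0)
    expect nu (fun u => g B (B `&` U) (restr (B `&` U) u)) =
    \big[mule/1%E]_(A <- QU Q U) expect nu (fun u => g' A (restr A u)).
  rewrite big_QU // big_seq_cond [RHS]big_seq_cond.
  apply: eq_bigr => B /andP[BQ nB]; congr expect; apply: funext => u.
  by rewrite g'E.
apply: lee_pmul2l'; first by rewrite lee_fin.
  by apply: expect_ge0 => m; apply: prodr_ge0 => A _; exact: g'0.
apply: (hPNA (QU Q U) g').
- exact: QU_partition.
- exact: cQ.
- by move=> A _ m; exact: g'0.
- have gm' A : A \in QU Q U -> mon b (g' A).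
    move=> /QUP[B BQ [nB ->]] m m' le; rewrite !g'E //; exact: gm.
  clear gm; case: b gm' => gm'; [left|right] => A AQ m m' le; exact: (gm' A AQ m m' le).
Qed.


Lemma mem_le_refl (S : {fset Var}) (m : Mem S) : mem_le m m.
Proof. by move=> s. Qed.

Lemma MB (S T : {fset Var}) (mu1 : distr R S) (mu2 : distr R T)
  (mu : distr R (S `|` T)) (PS PT Q : {fset {fset Var}})
  (f : forall A : {fset Var}, Mem A -> R) (b : bool) (n : R) :
  S `&` T = fset0 ->
  partition_of_subset PS S -> partition_of_subset PT T ->
  PNA mu1 PS -> PNA mu2 PT ->
  (forall x, mu x = mu1 (restr S x) * mu2 (restr T x)) ->
  is_partition Q -> coarsens Q (PS `|` PT) ->
  (forall B, B \in Q -> forall z, 0 <= f B z) ->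
  (forall B, B \in Q -> forall z, f B z <= n) ->
  (forall B, B \in Q -> mon b (f B)) ->
  (expect mu (fun m => (\prod_(B <- Q) f B (restr B m))%R) <=
   \big[mule/1%E]_(B <- Q) expect mu (fun m => f B (restr B m)))%E.
Proof.
move=> dST hPS hPT nu1 nu2 muE pQ cQ f0 fn fm.
have n0 : forall B, B \in Q -> 0 <= n.
  by move=> B BQ; apply: le_trans (f0 B BQ [ffun => 0]) (fn B BQ [ffun => 0]).
pose E1 B (y : Mem T) := expect mu1 (fun x => f B (restr B (join x y))).
have E10 B y : B \in Q -> (0 <= E1 B y)%E.
  by move=> BQ; apply: expect_ge0 => x; exact: f0.
have E1n B y : B \in Q -> (E1 B y <= n%:E)%E.
  move=> BQ; rewrite -(expect_cst mu1 (n0 B BQ)); apply: expect_le => x.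
    exact: f0.
  exact: fn.
have E1fin B y : B \in Q -> E1 B y \is a fin_num.
  move=> BQ; rewrite ge0_fin_numE; last exact: E10.
  by apply: le_lt_trans (E1n B y BQ) _; rewrite ltry.
pose G B y := fine (E1 B y).
have GE B y : B \in Q -> (G B y)%:E = E1 B y by move=> BQ; rewrite fineK //; exact: E1fin.
have G0 B y : B \in Q -> 0 <= G B y by move=> BQ; rewrite /G fine_ge0 //; exact: E10.
rewrite (expect_fubini (mu1:=mu1) (mu2:=mu2)) //; last first.
  by move=> m; rewrite big_seq_cond; apply: prodr_ge0 => B /andP[BQ _]; exact: f0.
pose x0 : Mem S := [ffun => 0].
pose y0 : Mem T := [ffun => 0].
apply: (@le_trans _ _ (expect mu2 (fun y => \prod_(B <- Q) G B y))).
  apply: le_esum => y _; apply: lee_pmul2l'; first by rewrite lee_fin dmass_ge0.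
    apply: expect_ge0 => x; rewrite big_seq_cond.
    by apply: prodr_ge0 => B /andP[BQ _]; exact: f0.
  pose gS := fun B A (x' : Mem A) => f B (restr B (join (upd x' x0) y)).
  have -> : (fun x : Mem S => \prod_(B <- Q) f B (restr B (join x y))) =
     (fun x : Mem S => \prod_(B <- Q) gS B (B `&` S) (restr (B `&` S) x)).
    by apply: funext => x; apply: eq_bigr => B _; rewrite /gS -restr_join_updl.
  apply: le_trans (GL (P:=PS) (b:=b) nu1 pQ _ _ _) _.
  - exact: QU_coarsens dST hPS hPT cQ.
  - by move=> B BQ z; exact: f0.
  - move=> B BQ m m' le; apply: fm => //; apply: restr_le; apply: join_le.
      exact: upd_le.
    exact: mem_le_refl.
  rewrite -prodEFin big_seq [in X in (_ <= X)%E]big_seq le_eqVlt; apply/orP; left; apply/eqP.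
  apply: eq_bigr => B BQ; rewrite GE //; congr expect; apply: funext => x.
  by rewrite /gS -restr_join_updl.
pose gT := fun B A (y' : Mem A) => G B (upd y' y0).
have GupdE B (y : Mem T) : G B y = G B (upd (restr (B `&` T) y) y0).
  rewrite /G /E1; congr fine; congr expect; apply: funext => x.
  by rewrite -restr_join_updr.
have Gmon B (y y' : Mem T) : B \in Q -> mem_le y y' ->
    if b then G B y <= G B y' else G B y' <= G B y.
  move=> BQ le; have hm := fm B BQ.
  have hxy (x : Mem S) : mem_le (restr B (join x y)) (restr B (join x y')).
    by apply: restr_le; apply: join_le => //; exact: mem_le_refl.
  have h x := hm _ _ (hxy x).
  case E: b h => h; rewrite /G; apply: fine_le; try exact: E1fin.
    by apply: expect_le => x; [exact: f0|exact: h].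
  by apply: expect_le => x; [exact: f0|exact: h].
have -> : (fun y : Mem T => \prod_(B <- Q) G B y) =
   (fun y : Mem T => \prod_(B <- Q) gT B (B `&` T) (restr (B `&` T) y)).
  by apply: funext => y; apply: eq_bigr => B _; rewrite /gT -GupdE.
apply: le_trans (GL (P:=PT) (b:=b) nu2 pQ _ _ _) _.
- apply: (QU_coarsens (S:=T) (T:=S)) hPT hPS _; first by rewrite fsetIC.
  by rewrite fsetUC.
- by move=> B BQ z; exact: G0.
- by move=> B BQ m m' le; apply: Gmon => //; exact: upd_le.
rewrite big_seq [in X in (_ <= X)%E]big_seq le_eqVlt; apply/orP; left; apply/eqP.
apply: eq_bigr => B BQ.
rewrite [RHS](expect_fubini (mu1:=mu1) (mu2:=mu2)) //; last by move=> m; exact: f0.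
apply: eq_esum => y _; congr (_ * _)%E; rewrite /gT -GupdE GE //.
Qed.


Lemma lee_prod_nneg (I : eqType) (s : seq I) (F G : I -> \bar R) :
  (forall i, i \in s -> (0 <= F i)%E) -> (forall i, i \in s -> (F i <= G i)%E) ->
  (\big[mule/1%E]_(i <- s) F i <= \big[mule/1%E]_(i <- s) G i)%E.
Proof.
elim: s => [|i s IH] F0 FG; first by rewrite !big_nil.
rewrite !big_cons; apply: lee_pmul.
- by apply: F0; rewrite inE eqxx.
- by rewrite big_seq; apply: prode_ge0 => j js; apply: F0; rewrite inE js orbT.
- by apply: FG; rewrite inE eqxx.
- by apply: IH => j js; [apply: F0|apply: FG]; rewrite inE js orbT.
Qed.

Lemma part1 (S T : {fset Var}) (mu1 : distr R S) (mu2 : distr R T)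
  (PS PT : {fset {fset Var}}) :
  S `&` T = fset0 ->
  partition_of_subset PS S -> partition_of_subset PT T ->
  PNA mu1 PS -> PNA mu2 PT ->
  forall mu, indep_prod mu1 mu2 mu -> PNA mu (PS `|` PT).
Proof.
move=> dST hPS hPT nu1 nu2 mu [_ muE].
have nST v : v \in S -> v \in T -> False.
  move=> vS vT; have : v \in S `&` T by rewrite in_fsetI vS vT.
  by rewrite dST inE.
split.
  case: (hPS) => [[nS dS] _]; case: (hPT) => [[nT dT] _]; split.
    by move=> A; rewrite in_fsetU => /orP[/nS|/nT].
  have mix A B : A \in PS -> B \in PT -> A `&` B = fset0.
    move=> AS BT; apply/fsetP => v; rewrite in_fsetI inE.
    apply/negP => /andP[vA vB].
    exact: nST (in_part_sub hPS AS vA) (in_part_sub hPT BT vB).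
  move=> A B; rewrite !in_fsetU => /orP[AS|AT] /orP[BS|BT] nAB.
  - exact: dS.
  - exact: mix.
  - by rewrite fsetIC; apply: mix.
  - exact: dT.
split.
  apply/fsubsetP => v; rewrite bigUU /dom in_fsetU => /orP[/in_bigU[C CS vC]|/in_bigU[C CT vC]].
    by rewrite (in_part_sub hPS CS vC).
  by rewrite (in_part_sub hPT CT vC) orbT.
move=> Q f pQ cQ f0 fmon.
have [b fb] : exists b, forall B, B \in Q -> mon b (f B).
  by case: fmon => h; [exists true|exists false] => B BQ m m' le; exact: h.
rewrite [X in (X <= _)%E]/expect /esum.
apply: ge_ereal_sup => _ [X [finX _] <-].
pose n := \big[Num.max/0]_(m <- fset_set X) \big[Num.max/0]_(B <- Q) f B (restr B m).
pose fn := fun A (z : Mem A) => Num.min (f A z) n.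
have n0 : 0 <= n by apply: bigmax_ge_id.
have fnE m : m \in X -> \prod_(B <- Q) f B (restr B m) = \prod_(B <- Q) fn B (restr B m).
  move=> mX; rewrite big_seq [RHS]big_seq; apply: eq_bigr => B BQ.
  rewrite /fn; apply/esym/min_idPl.
  apply: (bigmax_sup_seq _ m); first by rewrite in_fset_set.
    done.
  exact: (bigmax_sup_seq _ B).
apply: (@le_trans _ _ (expect mu (fun m => \prod_(B <- Q) fn B (restr B m)))).
  apply: esum_ge; exists X; first by split.
  by rewrite le_eqVlt; apply/orP; left; apply/eqP; apply: eq_fsbigr => m mX; rewrite fnE.
apply: le_trans (MB (b:=b) (n:=n) dST hPS hPT nu1 nu2 muE pQ cQ _ _ _) _.
- by move=> B BQ z; rewrite /fn le_min f0 // n0.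
- by move=> B BQ z; rewrite /fn ge_min lexx orbT.
- move=> B BQ m m' le; have := fb B BQ m m' le; rewrite /fn.
  by case: b {fb fmon} => h; rewrite le_min !ge_min lexx !orbT ?h.
apply: lee_prod_nneg => B BQ.
  by apply: expect_ge0 => m; rewrite /fn le_min f0 // n0.
apply: expect_le => m; first by rewrite /fn le_min f0 // n0.
by rewrite /fn ge_min lexx.
Qed.


Lemma marg_l (S T : {fset Var}) (mu1 : distr R S) (mu2 : distr R T)
  (mu : distr R (S `|` T)) :
  S `&` T = fset0 ->
  (forall x, mu x = mu1 (restr S x) * mu2 (restr T x)) ->
  forall y : Mem S, marginal S mu y = (mu1 y)%:E.
Proof.
move=> dST muE y; rewrite /marginal.
rewrite (reindex_esum (@setT (Mem T)) _ (fun z => join y z)); last first.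
  split.
  - by move=> z _ /=; rewrite restr_joinl.
  - move=> z z' _ _ /= e; have := congr1 (restr T) e.
    by rewrite !restr_joinr.
  - move=> m /= e; exists (restr T m) => //; by rewrite -e join_restr.
under eq_esum do rewrite muE restr_joinl restr_joinr // EFinM.
rewrite esumZ ?dmass_sum1 ?mule1 // ?dmass_ge0 // => z.
by rewrite lee_fin dmass_ge0.
Qed.

Lemma marg_r (S T : {fset Var}) (mu1 : distr R S) (mu2 : distr R T)
  (mu : distr R (S `|` T)) :
  S `&` T = fset0 ->
  (forall x, mu x = mu1 (restr S x) * mu2 (restr T x)) ->
  forall y : Mem T, marginal T mu y = (mu2 y)%:E.
Proof.
move=> dST muE y; rewrite /marginal.
rewrite (reindex_esum (@setT (Mem S)) _ (fun z => join z y)); last first.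
  split.
  - by move=> z _ /=; rewrite restr_joinr.
  - move=> z z' _ _ /= e; have := congr1 (restr S) e.
    by rewrite !restr_joinl.
  - move=> m /= e; exists (restr S m) => //; by rewrite -e join_restr.
under eq_esum do rewrite muE restr_joinl restr_joinr // EFinM muleC.
rewrite esumZ ?dmass_sum1 ?mule1 // ?dmass_ge0 // => z.
by rewrite lee_fin dmass_ge0.
Qed.

End Aux.

Theorem mainTheorem8 (Var : choiceType) (R : realType) :
  (forall (S T : {fset Var}) (mu1 : distr R S) (mu2 : distr R T)
          (PS PT : {fset {fset Var}}),
     fsetI S T = fset0 ->
     partition_of_subset PS S -> partition_of_subset PT T ->
     PNA mu1 PS -> PNA mu2 PT ->
     forall mu, indep_prod mu1 mu2 mu -> PNA mu (fsetU PS PT)) /\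
  (forall (S T : {fset Var}) (mu1 : distr R S) (mu2 : distr R T),
     subset (indep_prod mu1 mu2) (oplus mu1 mu2)).
Proof.
split; first exact: part1.
move=> S T mu1 mu2 mu [dST muE]; split; first by [].
split; first exact: marg_l.
split; first exact: marg_r.
move=> PS PT hPS hPT nu1 nu2; exact: (part1 dST hPS hPT nu1 nu2 (mu := mu)).
Qed.
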